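(* Let $A$ be a finite alphabet and $n\ge 1$. Then: (a) there exist $A$, $n$ and a weakly regular $P\subseteq (A^\ast)^n$ whose complement $(A^\ast)^n\setminus P$ is not weakly regular; (b) for all weakly regular $P,Q\subseteq (A^\ast)^n$, the union $P\cup Q$ is weakly regular; (c) there exist $A$, $n$ and weakly regular $P,Q\subseteq(A^\ast)^n$ such that $P\cap Q$ is not weakly regular; (d) for every $n\ge2$ and every weakly regular $P\subseteq (A^\ast)^n$, the language $\{(x_2,\ldots,x_n):(\exists x_1\in A^\ast)(x_1,\ldots,x_n)\in P\}$ is weakly regular; (e) there exist $A$, $n\ge 2$ and a weakly regular $P\subseteq(A^\ast)^n$ such that $\{(x_2,\ldots,x_n):(\forall x_1\in A^\ast)(x_1,\ldots,x_n)\in P\}$ is not weakly regular.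
   Context: An $n$-variable language (predicate) over a finite alphabet $A$ is a subset of $(A^\ast)^n$, $A^\ast$ the set of finite words over $A$. A shuffle of $(w_1,\ldots,w_n)$ is an ordering of all the letters of the $w_i$ respecting the order within each $w_i$; $w\$$ denotes $w$ followed by a new symbol $\$$. Weakly regular: $L$ is weakly regular if it is accepted by an $n$-tape non-deterministic semi-sorted asynchronous automaton, i.e., a non-deterministic finite state automaton over $A\sqcup\{\$\}$ (possibly several start states and $\epsilon$-transitions) with a partition of its states into sets $S_1,\ldots,S_n$; it accepts $(w_1,\ldots,w_n)$ iff there is a path from a start state to an accept state reading a shuffle of $(w_1\$,\ldots,w_n\$)$, where a letter-labelled transition out of a state in $S_i$ reads the next letter of the $i$-th tape ($\epsilon$-transitions read nothing). *)

(* Defs.v *)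
From mathcomp Require Import all_boot.
Set Implicit Arguments. Unset Strict Implicit. Unset Printing Implicit Defensive.

Definition lang (A : finType) (n : nat) := ('I_n -> seq A) -> Prop.

(* Letters of A ⊔ {$} are encoded as option A (Some a = a, None = $).
   [tape q] says which block S_i of the partition the state q belongs to. *)
Record nssa (A : finType) (n : nat) := NSSA {
  st : finType;
  start : pred st;
  accept : pred st;
  tape : st -> 'I_n;
  eps : rel st;
  trans : st -> option A -> st -> bool
}.
Arguments st {A n}. Arguments start {A n}. Arguments accept {A n}.
Arguments tape {A n}. Arguments eps {A n}. Arguments trans {A n}.

Definition config A n (M : nssa A n) := (st M * ('I_n -> seq (option A)))%type.

Inductive step A n (M : nssa A n) : config M -> config M -> Prop :=
| step_eps q q' r : eps M q q' -> step (q, r) (q', r)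
| step_letter q q' r c rest :
    trans M q c q' -> r (tape M q) = c :: rest ->
    step (q, r) (q', fun i => if i == tape M q then rest else r i).

Inductive reach A n (M : nssa A n) : config M -> config M -> Prop :=
| reach_refl c : reach c c
| reach_step c1 c2 c3 : step c1 c2 -> reach c2 c3 -> reach c1 c3.

Definition tape_input A n (w : 'I_n -> seq A) : 'I_n -> seq (option A) :=
  fun i => rcons (map Some (w i)) None.

Definition accepts A n (M : nssa A n) (w : 'I_n -> seq A) : Prop :=
  exists q0 qf, start M q0 /\ accept M qf /\
    reach (q0, tape_input w) (qf, fun _ => [::]).

Definition weakly_regular A n (P : lang A n) : Prop :=
  exists M : nssa A n, forall w, P w <-> accepts M w.

Definition fcons A n (x1 : seq A) (x : 'I_n -> seq A) : 'I_n.+1 -> seq A :=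
  fun i => match unlift ord0 i with None => x1 | Some j => x j end.

(* Main.v *)
From Stdlib Require Import Classical ClassicalEpsilon FunctionalExtensionality.
Require Import Defs.
From mathcomp Require Import all_boot zify.
Set Implicit Arguments. Unset Strict Implicit. Unset Printing Implicit Defensive.

Lemma cat_cancel_r (T : Type) (u v s : seq T) : u ++ s = v ++ s -> u = v.
Proof.
elim: u v => [|a u IH] [|b v] //= H.
- by have := congr1 size H; rewrite /= size_cat; lia.
- by have := congr1 size H; rewrite /= size_cat; lia.
- by case: H => -> /IH ->.
Qed.

Lemma cat_nil_l (T : Type) (u s : seq T) : u ++ s = s -> u = [::].
Proof. by move=> H; apply: (@cat_cancel_r _ _ _ s). Qed.

Definition upd T n (r : 'I_n -> T) (i : 'I_n) (s : T) : 'I_n -> T :=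
  fun j => if j == i then s else r j.

Lemma upd_same T n (r : 'I_n -> T) i a b : upd (upd r i a) i b = upd r i b.
Proof. apply: functional_extensionality => j; rewrite /upd; by case: (j == i). Qed.

Lemma upd_comm T n (r : 'I_n -> T) i j a b : i != j ->
  upd (upd r i a) j b = upd (upd r j b) i a.
Proof.
move=> ij; apply: functional_extensionality => k; rewrite /upd.
case: (eqVneq k j) => [->|//]; by rewrite eq_sym (negbTE ij).
Qed.

Section Gen.
Variables (A : finType) (n : nat) (M : nssa A n).

Lemma reach_trans (c1 c2 c3 : config M) : reach c1 c2 -> reach c2 c3 -> reach c1 c3.
Proof. elim=> [c|a b c Hs Hr IH] // H; exact: reach_step Hs (IH H). Qed.

Lemma reach_letter q q' (r : 'I_n -> seq (option A)) c rest c3 :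
  trans M q c q' -> r (tape M q) = c :: rest ->
  reach (q', upd r (tape M q) rest) c3 -> reach (q, r) c3.
Proof. move=> Ht Hr; apply: reach_step; exact: step_letter Ht Hr. Qed.

Lemma reach_eps q q' (r : 'I_n -> seq (option A)) c3 :
  eps M q q' -> reach (q', r) c3 -> reach (q, r) c3.
Proof. move=> He; apply: reach_step; exact: step_eps. Qed.

Lemma reach_suffix (c1 c2 : config M) : reach c1 c2 ->
  forall i, exists u, c1.2 i = u ++ c2.2 i.
Proof.
elim=> {c1 c2} [c|c1 c2 c3 Hs Hr IH] i; first by exists [::].
have [v Hv] := IH i.
case: Hs Hr IH Hv => [q q' r He|q q' r ch rest Ht Hrr] /= _ _ Hv; first by exists v.
move: Hv; rewrite /=; case: ifP => [/eqP ->|_] Hv.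
- by exists (ch :: v); rewrite Hrr Hv.
- by exists v.
Qed.

Lemma reach_replace (c1 c2 : config M) : reach c1 c2 ->
  forall i u z, c1.2 i = u ++ c2.2 i ->
  reach (c1.1, upd c1.2 i (u ++ z)) (c2.1, upd c2.2 i z).
Proof.
elim=> {c1 c2} [[q r]|c1 c2 c3 Hs Hr IH] i u z /=.
  move=> /esym /cat_nil_l ->; exact: reach_refl.
move=> H1.
have [v Hv] := reach_suffix Hr i.
case: Hs Hr IH Hv H1 => [q q' r He|q q' r ch rest Ht Hrr] /= Hr IH Hv H1.
- rewrite Hv in H1; have Euv := cat_cancel_r H1; subst u.
  apply: reach_eps He _; exact: IH.
- move: Hv; rewrite /=; case: (eqVneq i (tape M q)) => [Ei|Ni] Hv.
  + subst i. rewrite Hrr Hv -cat_cons in H1. have Euv := cat_cancel_r H1; subst u.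
    apply: (@reach_letter _ q' _ ch (v ++ z)) => //; first by rewrite /upd eqxx.
    have IH' := IH (tape M q) v z; rewrite eqxx in IH'.
    have E : upd (upd r (tape M q) ((ch :: v) ++ z)) (tape M q) (v ++ z) = upd (upd r (tape M q) rest) (tape M q) (v ++ z) by rewrite !upd_same.
    rewrite E; exact: IH' Hv.
  + rewrite Hv in H1; have Euv := cat_cancel_r H1; subst u.
    apply: (@reach_letter _ q' _ ch rest) => //; first by rewrite /upd eq_sym (negbTE Ni).
    have -> : upd (upd r i (v ++ z)) (tape M q) rest = upd (upd r (tape M q) rest) i (v ++ z).
      by apply: upd_comm.
    apply: IH; by rewrite (negbTE Ni).
Qed.

Lemma reach_mid (c1 c2 : config M) : reach c1 c2 -> forall i u s,
  c1.2 i = u ++ s -> (exists v, s = v ++ c2.2 i) ->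
  exists c : config M, c.2 i = s /\ reach c1 c /\ reach c c2.
Proof.
elim=> {c1 c2} [c|c1 c2 c3 Hs Hr IH] i u s H1 [v Hv].
  rewrite Hv catA in H1; have := cat_nil_l (esym H1).
  case: u {H1} => //; case: v Hv => //= -> _.
  exists c; split; [by [] | split; exact: reach_refl].
case: u H1 => [|a u] H1.
  exists c1; split => //; split; [exact: reach_refl | exact: reach_step Hs Hr].
case: Hs Hr IH H1 => [q q' r He|q q' r ch rest Ht Hrr] Hr IH /= H1.
- have [c [Hc1 [Hc2 Hc3]]] := IH i (a :: u) s H1 (ex_intro _ v Hv).
  exists c; split => //; split => //; apply: reach_step Hc2; exact: step_eps.
- case: (eqVneq i (tape M q)) => [Ei|Ni].
  + subst i; rewrite Hrr in H1; case: H1 => _ Hrest.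
    have H2 : (if tape M q == tape M q then rest else r (tape M q)) = u ++ s by rewrite eqxx Hrest.
    have [c [Hc1 [Hc2 Hc3]]] := IH (tape M q) u s H2 (ex_intro _ v Hv).
    exists c; split => //; split => //; apply: reach_step Hc2; exact: step_letter Ht Hrr.
  + have H2 : (if i == tape M q then rest else r i) = (a :: u) ++ s by rewrite (negbTE Ni).
    have [c [Hc1 [Hc2 Hc3]]] := IH i (a :: u) s H2 (ex_intro _ v Hv).
    exists c; split => //; split => //; apply: reach_step Hc2; exact: step_letter Ht Hrr.
Qed.
End Gen.

Definition enc (A : Type) (x : seq A) := rcons (map Some x) None.

Definition pb (P : Prop) : bool := if excluded_middle_informative P then true else false.
Lemma pbP P : pb P <-> P.
Proof. by rewrite /pb; case: excluded_middle_informative. Qed.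

Lemma one_fun T (r : 'I_1 -> T) : r = fun _ => r ord0.
Proof. by apply: functional_extensionality => i; rewrite (ord1 i). Qed.

Lemma upd1 T (r : 'I_1 -> T) s : upd r ord0 s = fun _ => s.
Proof. by apply: functional_extensionality => i; rewrite /upd (ord1 i) eqxx. Qed.

Section MN.
Variables (A : finType) (M : nssa A 1).
Definition Sset (u : seq A) : {set st M} :=
  [set p | pb (exists q0, start M q0 /\ reach (q0, fun _ : 'I_1 => map Some u) (p, fun _ => [::]))].

Lemma MN u1 u2 v : Sset u1 = Sset u2 ->
  accepts M (fun _ => u1 ++ v) -> accepts M (fun _ => u2 ++ v).
Proof.
move=> ES [q0 [qf [Hs [Ha Hr]]]].
have E1 : (tape_input (fun _ : 'I_1 => u1 ++ v)) ord0 = map Some u1 ++ enc v.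
  by rewrite /tape_input /enc map_cat rcons_cat.
have [[p r] [/= Hc1 [Hc2 Hc3]]] := reach_mid Hr E1 (ex_intro _ (enc v) (esym (cats0 _))).
have R1 := reach_replace (i := ord0) (u := map Some u1) Hc2 [::].
rewrite /= Hc1 in R1; have {R1} R1 := R1 E1.
rewrite !upd1 cats0 in R1.
have : p \in Sset u1 by rewrite inE; apply/pbP; exists q0.
rewrite ES inE => /pbP [q0' [Hs' Hr']].
have R2 := reach_replace (i := ord0) (u := map Some u2) Hr' (enc v).
rewrite /= cats0 !upd1 in R2; have {R2} R2 := R2 erefl.
exists q0', qf; split => //; split => //.
have -> : tape_input (fun _ : 'I_1 => u2 ++ v) = fun _ => map Some u2 ++ enc v.
  by apply: functional_extensionality => i; rewrite /tape_input /enc map_cat rcons_cat.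
apply: reach_trans R2 _; by rewrite [r]one_fun Hc1 in Hc3.
Qed.
End MN.

Lemma pigeon (T : finType) (f : nat -> T) : exists i j, i <> j /\ f i = f j.
Proof.
apply: NNPP => H.
have inj : injective (fun k : 'I_(#|T|.+1) => f k).
  move=> x y Exy; apply: val_inj; apply: NNPP => Nxy; apply: H; by exists x, y.
by have := leq_card _ inj; rewrite card_ord ltnn.
Qed.

Definition Leq (y : 'I_1 -> seq bool) := count id (y ord0) = count negb (y ord0).

Lemma Leq_not_WR : ~ weakly_regular Leq.
Proof.
move=> [M HM].
have [i [j [Nij Eij]]] := pigeon (fun k => Sset M (nseq k false)).
have : accepts M (fun _ => nseq i false ++ nseq i true).
  by apply/HM; rewrite /Leq !count_cat !count_nseq /=; lia.
move/(MN Eij)/HM; rewrite /Leq !count_cat !count_nseq /=; lia.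
Qed.

Section Union.
Variables (A : finType) (n : nat) (M1 M2 : nssa A n).
Definition ustart (s : st M1 + st M2) : bool :=
  match s with inl q => start M1 q | inr q => start M2 q end.
Definition uacc (s : st M1 + st M2) : bool :=
  match s with inl q => accept M1 q | inr q => accept M2 q end.
Definition utape (s : st M1 + st M2) : 'I_n :=
  match s with inl q => tape M1 q | inr q => tape M2 q end.
Definition ueps (s s' : st M1 + st M2) : bool :=
  match s, s' with inl q, inl q' => eps M1 q q' | inr q, inr q' => eps M2 q q' | _, _ => false end.
Definition utrans (s : st M1 + st M2) c (s' : st M1 + st M2) : bool :=
  match s, s' with inl q, inl q' => trans M1 q c q' | inr q, inr q' => trans M2 q c q' | _, _ => false end.
Definition Uni : nssa A n := @NSSA A n (st M1 + st M2)%type ustart uacc utape ueps utrans.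

Lemma lift1 (c1 c2 : config M1) : reach c1 c2 -> @reach _ _ Uni (inl c1.1, c1.2) (inl c2.1, c2.2).
Proof.
elim=> {c1 c2} [c|c1 c2 c3 Hs Hr IH]; first exact: reach_refl.
case: Hs Hr IH => [q q' r He|q q' r ch rest Ht Hrr] _ IH.
- exact: (@reach_eps _ _ Uni (inl q) (inl q') r _ He IH).
- exact: (@reach_letter _ _ Uni (inl q) (inl q') r ch rest _ Ht Hrr IH).
Qed.

Lemma lift2 (c1 c2 : config M2) : reach c1 c2 -> @reach _ _ Uni (inr c1.1, c1.2) (inr c2.1, c2.2).
Proof.
elim=> {c1 c2} [c|c1 c2 c3 Hs Hr IH]; first exact: reach_refl.
case: Hs Hr IH => [q q' r He|q q' r ch rest Ht Hrr] _ IH.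
- exact: (@reach_eps _ _ Uni (inr q) (inr q') r _ He IH).
- exact: (@reach_letter _ _ Uni (inr q) (inr q') r ch rest _ Ht Hrr IH).
Qed.

Lemma back1 (c1 c2 : config Uni) : reach c1 c2 -> forall q, c1.1 = inl q ->
  exists q', c2.1 = inl q' /\ reach (M := M1) (q, c1.2) (q', c2.2).
Proof.
elim=> {c1 c2} [[s r]|c1 c2 c3 Hs Hr IH] q /= Hq.
  by exists q; split => //; exact: reach_refl.
case: Hs Hr IH Hq => [s s' r He|s s' r ch rest Ht Hrr] _ IH /= Hq; subst s.
- case: s' He IH => //= q' He IH; have [q'' [E R]] := IH q' erefl.
  by exists q''; split => //; exact: reach_eps He R.
- case: s' Ht IH => //= q' Ht IH; have [q'' [E R]] := IH q' erefl.
  by exists q''; split => //; exact: reach_letter Ht Hrr R.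
Qed.

Lemma back2 (c1 c2 : config Uni) : reach c1 c2 -> forall q, c1.1 = inr q ->
  exists q', c2.1 = inr q' /\ reach (M := M2) (q, c1.2) (q', c2.2).
Proof.
elim=> {c1 c2} [[s r]|c1 c2 c3 Hs Hr IH] q /= Hq.
  by exists q; split => //; exact: reach_refl.
case: Hs Hr IH Hq => [s s' r He|s s' r ch rest Ht Hrr] _ IH /= Hq; subst s.
- case: s' He IH => //= q' He IH; have [q'' [E R]] := IH q' erefl.
  by exists q''; split => //; exact: reach_eps He R.
- case: s' Ht IH => //= q' Ht IH; have [q'' [E R]] := IH q' erefl.
  by exists q''; split => //; exact: reach_letter Ht Hrr R.
Qed.

Lemma acc_Uni w : accepts Uni w <-> accepts M1 w \/ accepts M2 w.
Proof.
split.
- move=> [[q0|q0] [qf [Hs [Ha Hr]]]].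
  + have [q' [/= E R]] := back1 Hr (q := q0) erefl; subst qf.
    by left; exists q0, q'.
  + have [q' [/= E R]] := back2 Hr (q := q0) erefl; subst qf.
    by right; exists q0, q'.
- move=> [[q0 [qf [Hs [Ha Hr]]]]|[q0 [qf [Hs [Ha Hr]]]]].
  + by exists (inl q0), (inl qf); split => //; split => //; exact: (lift1 Hr).
  + by exists (inr q0), (inr qf); split => //; split => //; exact: (lift2 Hr).
Qed.
End Union.

Lemma WR_ext (A : finType) n (P Q : lang A n) :
  weakly_regular P -> (forall w, P w <-> Q w) -> weakly_regular Q.
Proof. move=> [M HM] E; exists M => w; rewrite -E; exact: HM. Qed.

Lemma WR_union (A : finType) n (P Q : lang A n) :
  weakly_regular P -> weakly_regular Q -> weakly_regular (fun w => P w \/ Q w).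
Proof.
move=> [M1 H1] [M2 H2]; exists (Uni M1 M2) => w; rewrite acc_Uni H1 H2; done.
Qed.

Section FconsLemmas.
Variables (T : Type) (m : nat).
Lemma fcons0 (s : seq T) (r : 'I_m -> seq T) : fcons s r ord0 = s.
Proof. by rewrite /fcons unlift_none. Qed.
Lemma fconsS (s : seq T) (r : 'I_m -> seq T) j : fcons s r (lift ord0 j) = r j.
Proof. by rewrite /fcons liftK. Qed.
Definition tailf (R : 'I_m.+1 -> seq T) : 'I_m -> seq T := fun j => R (lift ord0 j).
Lemma fcons_tail (R : 'I_m.+1 -> seq T) : fcons (R ord0) (tailf R) = R.
Proof.
apply: functional_extensionality => i; rewrite /fcons /tailf.
by case: unliftP => [j ->|->].
Qed.
Lemma upd_fcons0 (s s' : seq T) (r : 'I_m -> seq T) : upd (fcons s r) ord0 s' = fcons s' r.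
Proof.
apply: functional_extensionality => i; rewrite /upd /fcons.
case: unliftP => [j ->|->]; last by rewrite eqxx.
by rewrite eq_sym (negbTE (neq_lift _ _)).
Qed.
Lemma upd_fconsS (s s' : seq T) (r : 'I_m -> seq T) j :
  upd (fcons s r) (lift ord0 j) s' = fcons s (upd r j s').
Proof.
apply: functional_extensionality => i; rewrite /upd /fcons.
case: unliftP => [k ->|->]; first by rewrite (inj_eq lift_inj).
by rewrite (negbTE (neq_lift _ _)).
Qed.
End FconsLemmas.

Lemma tape_input_fcons (A : finType) m (x1 : seq A) (x : 'I_m -> seq A) :
  tape_input (fcons x1 x) = fcons (enc x1) (tape_input x).
Proof.
by apply: functional_extensionality => i; rewrite /tape_input /fcons; case: unliftP.
Qed.

Lemma enc_nil (A : Type) (x : seq A) : enc x <> [::].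
Proof. by rewrite /enc; case: x. Qed.

Definition goodtape (A : Type) (b : bool) (s : seq (option A)) :=
  if b then s = [::] else exists x, s = enc x.

Lemma goodtape_cons (A : eqType) (ch : option A) s :
  goodtape false (ch :: s) -> goodtape (ch == None) s.
Proof.
move=> [[|a x]]; rewrite /enc /=; first by case=> -> ->.
by case=> -> ->; exists x.
Qed.

Lemma goodtape_cons' (A : eqType) (ch : option A) s :
  goodtape (ch == None) s -> goodtape false (ch :: s).
Proof.
case: ch => [a|] /=; first by move=> [x ->]; exists (a :: x).
by move=> ->; exists [::].
Qed.

Section Proj.
Variables (A : finType) (m : nat) (M : nssa A m.+2).
Definition pst := (st M * bool)%type.
Definition pstart (s : pst) := start M s.1 && ~~ s.2.
Definition pacc (s : pst) := accept M s.1 && s.2.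
Definition ptape (s : pst) : 'I_m.+1 :=
  match unlift ord0 (tape M s.1) with Some j => j | None => ord0 end.
Definition peps (s s' : pst) :=
  (eps M s.1 s'.1 && (s'.2 == s.2)) ||
  [&& tape M s.1 == ord0, ~~ s.2 & [exists c : option A, trans M s.1 c s'.1 && (s'.2 == (c == None))]].
Definition ptrans (s : pst) c (s' : pst) :=
  [&& tape M s.1 != ord0, trans M s.1 c s'.1 & s'.2 == s.2].
Definition PM : nssa A m.+1 := @NSSA A m.+1 pst pstart pacc ptape peps ptrans.

Lemma proj_fwd (c1 c2 : config M) : reach c1 c2 -> c2.2 = (fun _ => [::]) ->
  forall b, goodtape b (c1.2 ord0) ->
  reach (M := PM) ((c1.1, b), tailf c1.2) ((c2.1, true), fun _ => [::]).
Proof.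
elim=> {c1 c2} [[q R]|c1 c2 c3 Hs Hr IH] /= E3 b Hb.
  subst R; case: b Hb => [_|[x Hx]]; first exact: reach_refl.
  by case: (enc_nil (esym Hx)).
case: Hs Hr IH Hb => [q q' R He|q q' R ch rest Ht Hrr] Hr IH Hb.
- apply: (@reach_eps _ _ PM (q, b) (q', b)); last exact: IH E3 b Hb.
  by rewrite /= /peps /= He eqxx.
- case: (unliftP ord0 (tape M q)) => [j Ej|Ej].
  + apply: (@reach_letter _ _ PM (q, b) (q', b) _ ch rest).
    * by rewrite /= /ptrans /= Ej eq_sym neq_lift Ht eqxx.
    * by rewrite /= /ptape /= Ej liftK /tailf -Ej.
    * have -> : upd (tailf R) (tape PM (q, b)) rest = tailf (upd R (tape M q) rest).
        apply: functional_extensionality => k.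
        by rewrite /upd /tailf /= /ptape /= Ej liftK (inj_eq lift_inj).
      apply: IH => //; by rewrite /= /upd Ej (negbTE (neq_lift _ _)).
  + rewrite Ej in Hrr.
    rewrite /= in Hb; case: b Hb => Hb; first by rewrite Hb in Hrr.
    rewrite Hrr in Hb.
    apply: (@reach_eps _ _ PM (q, false) (q', ch == None)).
      rewrite /= /peps /= Ej eqxx /=; apply/orP; right; apply/existsP; exists ch.
      by rewrite Ht eqxx.
    have -> : tailf R = tailf (upd R (tape M q) rest).
      apply: functional_extensionality => k.
      by rewrite /upd /tailf Ej; have := neq_lift ord0 k; rewrite eq_sym => /negbTE ->.
    apply: IH => //; rewrite /= /upd Ej eqxx; exact: goodtape_cons.
Qed.

Lemma proj_bwd (c1 c2 : config PM) : reach c1 c2 -> c2.2 = (fun _ => [::]) -> accept PM c2.1 ->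
  exists s, goodtape c1.1.2 s /\ exists qf, accept M qf /\
    reach (M := M) (c1.1.1, fcons s c1.2) (qf, fun _ => [::]).
Proof.
elim=> {c1 c2} [[[q b] r]|c1 c2 c3 Hs Hr IH] /= E3 Ha.
  subst r; move: Ha; rewrite /= /pacc /=; case: b => /andP [Ha // _].
  exists [::]; split => //; exists q; split => //.
  have -> : fcons [::] (fun _ : 'I_m.+1 => [::]) = (fun _ => [::] : seq (option A)).
    by apply: functional_extensionality => i; rewrite /fcons; case: unlift.
  exact: reach_refl.
have {IH} IH := IH E3 Ha.
case: Hs Hr IH => [[q b] [q' b'] r He|[q b] [q' b'] r ch rest Ht Hrr] Hr /= [s0 [Hg [qf [Hqf R]]]].
- move: He; rewrite /peps /= => /orP [/andP [He /eqP Eb]|/and3P [Et Nb /existsP [ch /andP [Ht /eqP Eb]]]].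
  + move: Eb => /= Eb; subst b'; exists s0; split => //; exists qf; split => //; exact: reach_eps He R.
  + have Eb0 : b = false := negbTE Nb. rewrite /= Eb0. move: Eb => /= Eb; subst b'.
    exists (ch :: s0); split; first exact: goodtape_cons'.
    exists qf; split => //.
    apply: (reach_letter (rest := s0) Ht); first by rewrite (eqP Et) fcons0.
    by rewrite (eqP Et) upd_fcons0.
- move: Ht; rewrite /ptrans /= => /and3P [Nt Ht /eqP Eb]; move: Eb => /= Eb; subst b'.
  exists s0; split => //; exists qf; split => //.
  move: Hrr R; rewrite /ptape /=.
  case: (unliftP ord0 (tape M q)) => [j Ej|Ej]; last by rewrite Ej eqxx in Nt.
  move=> Hrr R; rewrite /= in Ht Nt.
  have Ep : ptape (q, b) = j by rewrite /ptape /= Ej liftK.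
  apply: (reach_letter (rest := rest) Ht); first by rewrite Ej fconsS -Ep.
  by rewrite Ej upd_fconsS; exact: R.
Qed.

Lemma acc_PM x : accepts PM x <-> exists x1, accepts M (fcons x1 x).
Proof.
split.
- move=> [[q0 b0] [qf [Hs [Ha Hr]]]].
  have [s [Hg [qf' [Hqf R]]]] := proj_bwd Hr erefl Ha.
  move: Hs; rewrite /= /pstart /= => /andP [Hs Hb]; rewrite /= (negbTE Hb) in Hg; move: Hg => [x1 Ex].
  exists x1, q0, qf'; split => //; split => //.
  by rewrite tape_input_fcons -Ex.
- move=> [x1 [q0 [qf [Hs [Ha Hr]]]]].
  have := proj_fwd Hr erefl (b := false).
  rewrite /= tape_input_fcons fcons0 => H.
  exists (q0, false), (qf, true); split; first by rewrite /= /pstart /= Hs.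
  split; first by rewrite /= /pacc /= Ha.
  have -> : tape_input x = tailf (fcons (enc x1) (tape_input x)).
    by apply: functional_extensionality => j; rewrite /tailf fconsS.
  apply: H; by exists x1.
Qed.
End Proj.

Lemma WR_proj (A : finType) n : 1 <= n ->
  forall P : lang A n.+1, weakly_regular P ->
  weakly_regular (fun x : 'I_n -> seq A => exists x1, P (fcons x1 x)).
Proof.
case: n => // m _ P [M HM]; exists (PM M) => x; rewrite acc_PM.
by split => [[x1 /HM H]|[x1 /HM H]]; exists x1.
Qed.

Definition t1 : 'I_2 := @Ordinal 2 1 erefl.
Definition pair2 T (s0 s1 : T) : 'I_2 -> T := fun i => if i == ord0 then s0 else s1.

Lemma pair2_eta T (r : 'I_2 -> T) : r = pair2 (r ord0) (r t1).
Proof.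
apply: functional_extensionality => -[[|[|k]] Hk] //=; rewrite /pair2 /=.
- by congr r; apply: val_inj.
- by congr r; apply: val_inj.
Qed.
Lemma upd_pair2_0 T (a b c : T) : upd (pair2 a b) ord0 c = pair2 c b.
Proof. by apply: functional_extensionality => i; rewrite /upd /pair2; case: (i == ord0). Qed.
Lemma upd_pair2_1 T (a b c : T) : upd (pair2 a b) t1 c = pair2 a c.
Proof.
apply: functional_extensionality => -[[|[|k]] Hk] //; rewrite /upd /pair2 /=.
Qed.
Lemma pair2_nil T : pair2 ([::] : seq T) [::] = fun _ => [::].
Proof. by apply: functional_extensionality => i; rewrite /pair2; case: (i == ord0). Qed.
Lemma tape_input2 (A : finType) (w : 'I_2 -> seq A) :
  tape_input w = pair2 (enc (w ord0)) (enc (w t1)).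
Proof. by rewrite [in LHS](pair2_eta (tape_input w)). Qed.

Lemma enc_inj (A : Type) (x y : seq A) : enc x = enc y -> x = y.
Proof.
move=> /rcons_inj [] E; elim: x y E => [|a x IH] [|b y] //= [-> /IH ->] //.
Qed.

Section DAut.
Variable b : bool.
Definition Dtrans (q : 'I_4) (c : option bool) (q' : 'I_4) : bool :=
  match val q, c, val q' with
  | 0, Some a, 0 => a != b
  | 0, Some a, 1 => a == b
  | 0, None, 2 => true
  | 1, Some _, 0 => true
  | 2, None, 3 => true
  | _, _, _ => false end.
Definition Dtape (q : 'I_4) : 'I_2 := if val q == 0 then t1 else ord0.
Definition DA : nssa bool 2 :=
  @NSSA bool 2 'I_4 (fun q => val q == 0) (fun q => val q == 3) Dtape (fun _ _ => false) Dtrans.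
Definition DL (w : 'I_2 -> seq bool) := size (w ord0) = count (pred1 b) (w t1).

Definition DInv (q : 'I_4) (s0 s1 : seq (option bool)) : Prop :=
  match val q with
  | 0 => exists x y, s0 = enc x /\ s1 = enc y /\ size x = count (pred1 b) y
  | 1 => exists x y, s0 = enc x /\ s1 = enc y /\ size x = (count (pred1 b) y).+1
  | 2 => s0 = [:: None] /\ s1 = [::]
  | _ => s0 = [::] /\ s1 = [::] end.

Lemma D_sound (c1 c2 : config DA) : reach c1 c2 -> c2.2 = (fun _ => [::]) ->
  accept DA c2.1 -> DInv c1.1 (c1.2 ord0) (c1.2 t1).
Proof.
elim=> {c1 c2} [[q r]|c1 c2 c3 Hs Hr IH] /= E3 Ha.
  by subst r; case: q Ha => [[|[|[|[|k]]]] Hq].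
have {IH} IH := IH E3 Ha.
case: Hs Hr IH => [q q' r He|q q' r ch rest Ht Hrr] Hr IH //.
move: Ht Hrr IH; clear Hr; rewrite /= /upd.
case: q => [[|[|[|[|k]]]] Hq] //; case: q' => [[|[|[|[|k']]]] Hq'] //;
  case: ch => [a|] //; rewrite /Dtrans /Dtape /DInv /= => Ht Hrr.
- move=> [x [y [E0 [E1 S]]]]; exists x, (a :: y); split => //; split; first by rewrite Hrr E1.
  by rewrite /= (negbTE Ht).
- move=> [x [y [E0 [E1 S]]]]; exists x, (a :: y); split => //; split; first by rewrite Hrr E1.
  by rewrite /= Ht.
- move=> [E0 E1]; exists [::], [::]; split => //; split => //; by rewrite Hrr E1.
- move=> [x [y [E0 [E1 S]]]]; exists (a :: x), y; split; first by rewrite Hrr E0.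
  by split => //=; rewrite S.
- by move=> [E0 E1]; rewrite Hrr E0.
Qed.

Definition Ds (k : nat) (H : k < 4) : 'I_4 := Ordinal H.

Lemma D_run y : forall x, size x = count (pred1 b) y ->
  reach (M := DA) (Ds (isT : 0 < 4), pair2 (enc x) (enc y)) (Ds (isT : 3 < 4), fun _ => [::]).
Proof.
elim: y => [|a y IH] x /= S.
  case: x S => // _.
  apply: (@reach_letter _ _ DA _ (Ds (isT : 2 < 4)) _ None ([::])); [exact: erefl|exact: erefl|].
  change (tape DA (Ds (isT : 0 < 4))) with t1; rewrite upd_pair2_1.
  apply: (@reach_letter _ _ DA _ (Ds (isT : 3 < 4)) _ None ([::])); [exact: erefl|exact: erefl|].
  change (tape DA (Ds (isT : 2 < 4))) with (ord0 : 'I_2); rewrite upd_pair2_0 pair2_nil; exact: reach_refl.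
case: (eqVneq a b) => [Eab|Nab].
- subst a; rewrite eqxx in S; case: x S => // c x [S].
  apply: (@reach_letter _ _ DA _ (Ds (isT : 1 < 4)) _ (Some b) (enc y)); [by rewrite /= /Dtrans /= eqxx|exact: erefl|].
  change (tape DA (Ds (isT : 0 < 4))) with t1; rewrite upd_pair2_1.
  apply: (@reach_letter _ _ DA _ (Ds (isT : 0 < 4)) _ (Some c) (enc x)); [exact: erefl|exact: erefl|].
  change (tape DA (Ds (isT : 1 < 4))) with (ord0 : 'I_2); rewrite upd_pair2_0; exact: IH.
- rewrite (negbTE Nab) in S.
  apply: (@reach_letter _ _ DA _ (Ds (isT : 0 < 4)) _ (Some a) (enc y)); [by rewrite /= /Dtrans /= Nab|exact: erefl|].
  change (tape DA (Ds (isT : 0 < 4))) with t1; rewrite upd_pair2_1; exact: IH.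
Qed.

Lemma acc_DA w : accepts DA w <-> DL w.
Proof.
split.
- move=> [q0 [qf [Hs [Ha Hr]]]].
  have := D_sound Hr erefl Ha; rewrite /DInv /= (eqP Hs) /tape_input.
  by move=> [x [y [/enc_inj Ex [/enc_inj Ey S]]]]; rewrite /DL Ex Ey.
- move=> H; exists (Ds (isT : 0 < 4)), (Ds (isT : 3 < 4)); split => //; split => //.
  rewrite tape_input2; exact: D_run.
Qed.
End DAut.

Section EAut.
Variable b : bool.
Definition Etrans (q : 'I_6) (c : option bool) (q' : 'I_6) : bool :=
  match val q, c, val q' with
  | 0, Some a, 0 => a != b
  | 0, Some a, 1 => a == b
  | 0, None, 2 => true
  | 1, Some _, 0 => true
  | 1, None, 4 => true
  | 2, Some _, 3 => true
  | 3, Some _, 3 => true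
  | 3, None, 5 => true
  | 4, Some _, 4 => true
  | 4, None, 5 => true
  | _, _, _ => false end.
Definition Etape (q : 'I_6) : 'I_2 := if (val q == 0) || (val q == 4) then t1 else ord0.
Definition EA : nssa bool 2 :=
  @NSSA bool 2 'I_6 (fun q => val q == 0) (fun q => val q == 5) Etape (fun _ _ => false) Etrans.
Definition EL (w : 'I_2 -> seq bool) := size (w ord0) <> count (pred1 b) (w t1).

Definition EInv (q : 'I_6) (s0 s1 : seq (option bool)) : Prop :=
  match val q with
  | 0 => exists x y, s0 = enc x /\ s1 = enc y /\ size x != count (pred1 b) y
  | 1 => exists x y, s0 = enc x /\ s1 = enc y /\ size x != (count (pred1 b) y).+1
  | 2 => s1 = [::] /\ exists x, s0 = enc x /\ 0 < size x
  | 3 => s1 = [::] /\ exists x, s0 = enc x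
  | 4 => s0 = [::] /\ exists y, s1 = enc y
  | _ => s0 = [::] /\ s1 = [::] end.

Lemma E_sound (c1 c2 : config EA) : reach c1 c2 -> c2.2 = (fun _ => [::]) ->
  accept EA c2.1 -> EInv c1.1 (c1.2 ord0) (c1.2 t1).
Proof.
elim=> {c1 c2} [[q r]|c1 c2 c3 Hs Hr IH] /= E3 Ha.
  by subst r; case: q Ha => [[|[|[|[|[|[|k]]]]]] Hq].
have {IH} IH := IH E3 Ha.
case: Hs Hr IH => [q q' r He|q q' r ch rest Ht Hrr] Hr IH //.
move: Ht Hrr IH; clear Hr; rewrite /= /upd.
case: q => [[|[|[|[|[|[|k]]]]]] Hq] //; case: q' => [[|[|[|[|[|[|k']]]]]] Hq'] //;
  case: ch => [a|] //; rewrite /Etrans /Etape /EInv /= => Ht Hrr.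
- move=> [x [y [E0 [E1 S]]]]; exists x, (a :: y); split => //; split; first by rewrite Hrr E1.
  by rewrite /= (negbTE Ht).
- move=> [x [y [E0 [E1 S]]]]; exists x, (a :: y); split => //; split; first by rewrite Hrr E1.
  by rewrite /= Ht.
- move=> [E1 [x [E0 S]]]; exists x, [::]; split => //; split; first by rewrite Hrr E1.
  by rewrite /=; lia.
- move=> [x [y [E0 [E1 S]]]]; exists (a :: x), y; split; first by rewrite Hrr E0.
  by split => //=.
- move=> [E0 [y E1]]; exists [::], y; split; first by rewrite Hrr E0.
  by split.
- move=> [E1 [x E0]]; split => //; exists (a :: x); by rewrite Hrr E0.
- move=> [E1 [x E0]]; split => //; exists (a :: x); by rewrite Hrr E0.
- move=> [E0 E1]; split => //; exists [::]; by rewrite Hrr E0.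
- move=> [E0 [y E1]]; split => //; exists (a :: y); by rewrite Hrr E1.
- move=> [E0 E1]; split => //; exists [::]; by rewrite Hrr E1.
Qed.

Definition Es (k : nat) (H : k < 6) : 'I_6 := Ordinal H.

Lemma E_run3 x : reach (M := EA) (Es (isT : 3 < 6), pair2 (enc x) [::]) (Es (isT : 5 < 6), fun _ => [::]).
Proof.
elim: x => [|a x IH].
  apply: (@reach_letter _ _ EA _ (Es (isT : 5 < 6)) _ None ([::])); [exact: erefl|exact: erefl|].
  change (tape EA (Es (isT : 3 < 6))) with (ord0 : 'I_2); rewrite upd_pair2_0 pair2_nil; exact: reach_refl.
apply: (@reach_letter _ _ EA _ (Es (isT : 3 < 6)) _ (Some a) (enc x)); [exact: erefl|exact: erefl|].
change (tape EA (Es (isT : 3 < 6))) with (ord0 : 'I_2); rewrite upd_pair2_0; exact: IH.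
Qed.

Lemma E_run4 y : reach (M := EA) (Es (isT : 4 < 6), pair2 [::] (enc y)) (Es (isT : 5 < 6), fun _ => [::]).
Proof.
elim: y => [|a y IH].
  apply: (@reach_letter _ _ EA _ (Es (isT : 5 < 6)) _ None ([::])); [exact: erefl|exact: erefl|].
  change (tape EA (Es (isT : 4 < 6))) with t1; rewrite upd_pair2_1 pair2_nil; exact: reach_refl.
apply: (@reach_letter _ _ EA _ (Es (isT : 4 < 6)) _ (Some a) (enc y)); [exact: erefl|exact: erefl|].
change (tape EA (Es (isT : 4 < 6))) with t1; rewrite upd_pair2_1; exact: IH.
Qed.

Lemma E_run y : forall x, size x != count (pred1 b) y ->
  reach (M := EA) (Es (isT : 0 < 6), pair2 (enc x) (enc y)) (Es (isT : 5 < 6), fun _ => [::]).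
Proof.
elim: y => [|a y IH] x /= S.
  case: x S => // c x _.
  apply: (@reach_letter _ _ EA _ (Es (isT : 2 < 6)) _ None ([::])); [exact: erefl|exact: erefl|].
  change (tape EA (Es (isT : 0 < 6))) with t1; rewrite upd_pair2_1.
  apply: (@reach_letter _ _ EA _ (Es (isT : 3 < 6)) _ (Some c) (enc x)); [exact: erefl|exact: erefl|].
  change (tape EA (Es (isT : 2 < 6))) with (ord0 : 'I_2); rewrite upd_pair2_0; exact: E_run3.
case: (eqVneq a b) => [Eab|Nab].
- subst a; rewrite eqxx in S.
  apply: (@reach_letter _ _ EA _ (Es (isT : 1 < 6)) _ (Some b) (enc y)); [by rewrite /= /Etrans /= eqxx|exact: erefl|].
  change (tape EA (Es (isT : 0 < 6))) with t1; rewrite upd_pair2_1.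
  case: x S => [|c x] S.
    apply: (@reach_letter _ _ EA _ (Es (isT : 4 < 6)) _ None ([::])); [exact: erefl|exact: erefl|].
    change (tape EA (Es (isT : 1 < 6))) with (ord0 : 'I_2); rewrite upd_pair2_0; exact: E_run4.
  apply: (@reach_letter _ _ EA _ (Es (isT : 0 < 6)) _ (Some c) (enc x)); [exact: erefl|exact: erefl|].
  change (tape EA (Es (isT : 1 < 6))) with (ord0 : 'I_2); rewrite upd_pair2_0; exact: IH.
- rewrite (negbTE Nab) in S.
  apply: (@reach_letter _ _ EA _ (Es (isT : 0 < 6)) _ (Some a) (enc y)); [by rewrite /= /Etrans /= Nab|exact: erefl|].
  change (tape EA (Es (isT : 0 < 6))) with t1; rewrite upd_pair2_1; exact: IH.
Qed.

Lemma acc_EA w : accepts EA w <-> EL w.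
Proof.
split.
- move=> [q0 [qf [Hs [Ha Hr]]]].
  have := E_sound Hr erefl Ha; rewrite /EInv /= (eqP Hs) /tape_input.
  by move=> [x [y [/enc_inj Ex [/enc_inj Ey S]]]]; rewrite /EL Ex Ey; apply/eqP.
- move=> H; exists (Es (isT : 0 < 6)), (Es (isT : 5 < 6)); split => //; split => //.
  rewrite tape_input2; apply: E_run; exact/eqP.
Qed.
End EAut.

Lemma fcons_t1 (T : Type) (x1 : seq T) (x : 'I_1 -> seq T) : fcons x1 x t1 = x ord0.
Proof. have -> : t1 = lift ord0 (ord0 : 'I_1) by apply: val_inj. by rewrite fconsS. Qed.

Lemma count_true s : count (pred1 true) s = count id s.
Proof. by apply: eq_count => -[]. Qed.
Lemma count_false s : count (pred1 false) s = count negb s.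
Proof. by apply: eq_count => -[]. Qed.

Lemma WR_DA b : weakly_regular (DL b).
Proof. by exists (DA b) => w; rewrite acc_DA. Qed.
Lemma WR_EA b : weakly_regular (EL b).
Proof. by exists (EA b) => w; rewrite acc_EA. Qed.

Lemma c_notWR : ~ weakly_regular (fun w : 'I_2 -> seq bool => DL true w /\ DL false w).
Proof.
move=> H; have H1 := @WR_proj _ 1 isT _ H.
apply: Leq_not_WR; apply: (WR_ext H1) => x.
rewrite /DL /Leq; split.
- by move=> [x1]; rewrite !fcons0 !fcons_t1 count_true count_false => -[<- <-].
- move=> E; exists (nseq (count id (x ord0)) true).
  by rewrite !fcons0 !fcons_t1 count_true count_false size_nseq.
Qed.

Lemma e_notWR : ~ weakly_regular
  (fun x : 'I_1 -> seq bool => forall x1, (fun w => DL true w \/ EL false w) (fcons x1 x)).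
Proof.
move=> H; apply: Leq_not_WR; apply: (WR_ext H) => x.
rewrite /DL /EL /Leq; split.
- move=> /(_ (nseq (count negb (x ord0)) true)).
  rewrite !fcons0 !fcons_t1 count_true count_false size_nseq; by case.
- move=> E x1; rewrite !fcons0 !fcons_t1 count_true count_false -E.
  case: (eqVneq (size x1) (count id (x ord0))) => [->|/eqP]; by [left|right].
Qed.

Theorem mainTheorem5 :
  (* (a) complement *)
  (exists (A : finType) (n : nat) (P : lang A n),
      1 <= n /\ weakly_regular P /\ ~ weakly_regular (fun w => ~ P w)) /\
  (* (b) union *)
  (forall (A : finType) (n : nat), 1 <= n ->
     forall P Q : lang A n, weakly_regular P -> weakly_regular Q ->
       weakly_regular (fun w => P w \/ Q w)) /\
  (* (c) intersection *)
  (exists (A : finType) (n : nat) (P Q : lang A n),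
      1 <= n /\ weakly_regular P /\ weakly_regular Q /\
      ~ weakly_regular (fun w => P w /\ Q w)) /\
  (* (d) existential projection, arity n.+1 >= 2 *)
  (forall (A : finType) (n : nat), 1 <= n ->
     forall P : lang A n.+1, weakly_regular P ->
       weakly_regular (fun x : 'I_n -> seq A => exists x1, P (fcons x1 x))) /\
  (* (e) universal projection, arity n.+1 >= 2 *)
  (exists (A : finType) (n : nat) (P : lang A n.+1),
      1 <= n /\ weakly_regular P /\
      ~ weakly_regular (fun x : 'I_n -> seq A => forall x1, P (fcons x1 x))).
Proof.
split; last split; last split; last split.
- apply: NNPP => Hno.
  have compl : forall P : lang bool 2, weakly_regular P -> weakly_regular (fun w => ~ P w).
    move=> P HP; apply: NNPP => HnP; apply: Hno; by exists bool, 2, P.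
  have U := WR_union (compl _ (WR_DA true)) (compl _ (WR_DA false)).
  apply: c_notWR; apply: (WR_ext (compl _ U)) => w; split.
  + by move=> H; split; apply: NNPP => h; apply: H; [left|right].
  + by move=> [p q] [h|h]; [apply: h|apply: h].
- move=> A n _ P Q; exact: WR_union.
- exists bool, 2, (DL true), (DL false); split => //; split; first exact: WR_DA.
  split; first exact: WR_DA. exact: c_notWR.
- exact: WR_proj.
- exists bool, 1, (fun w => DL true w \/ EL false w); split => //; split; last exact: e_notWR.
  apply: WR_union; [exact: WR_DA | exact: WR_EA].
Qed.
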